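(* Let $n\ge 1$ and let $B^n=\{x\in\mathbb{R}^n : \|x\|\le 1\}$ be the closed unit ball. There is no decomposition of $B^n$ into sets of diameter less than $2/\sqrt{n}$ such that at most $n$ of the sets meet at any point.
   Context: A decomposition of a space $X$ is a locally finite collection (for compact $X$, a finite collection) of closed subsets of $X$ (the pieces) with pairwise disjoint interiors whose union is $X$. Diameters are Euclidean. *)

(* Defs.v *)
From HB Require Import structures.
From mathcomp Require Import all_boot all_order all_algebra.
From mathcomp Require Import all_classical all_reals all_analysis.
Set Implicit Arguments. Unset Strict Implicit. Unset Printing Implicit Defensive.
Import Order.TTheory GRing.Theory Num.Theory.
Import numFieldNormedType.Exports.
Local Open Scope classical_set_scope.
Local Open Scope ring_scope.

Definition enorm (R : realType) (n : nat) (x : 'rV[R]_n) : R :=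
  Num.sqrt (\sum_(i < n) (x ord0 i) ^+ 2).

Definition edist (R : realType) (n : nat) (x y : 'rV[R]_n) : R := enorm (x - y).

Definition unit_ball (R : realType) (n : nat) : set 'rV[R]_n :=
  [set x | enorm x <= 1].

Definition closed_in (R : realType) (n : nat) (X A : set 'rV[R]_n) : Prop :=
  exists C : set 'rV[R]_n, @closed 'rV[R]_n C /\ A = X `&` C.

Definition rel_interior (R : realType) (n : nat) (X A : set 'rV[R]_n)
  : set 'rV[R]_n :=
  [set x | A x /\ exists2 e : R, 0 < e &
     forall y, X y -> edist x y < e -> A y].

Definition diam_lt (R : realType) (n : nat) (A : set 'rV[R]_n) (c : R) : Prop :=
  exists2 d : R, d < c & forall x y, A x -> A y -> edist x y <= d.

Definition decomposition (R : realType) (n : nat) (I : finType)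
  (X : set 'rV[R]_n) (P : I -> set 'rV[R]_n) : Prop :=
  [/\ forall i, closed_in X (P i),
      forall i j, i != j -> rel_interior X (P i) `&` rel_interior X (P j) = set0,
      (forall i, P i `<=` X) &
      (forall x, X x -> exists i, P i x)].

Definition meet_count (R : realType) (n : nat) (I : finType)
  (P : I -> set 'rV[R]_n) (x : 'rV[R]_n) : nat :=
  #|[set i : I | `[< P i x >] ]%SET|.

(* Main.v *)
Require Import Defs.
From HB Require Import structures.
From mathcomp Require Import all_boot all_order all_algebra.
From mathcomp Require Import zify.

Module Disc.
Set Implicit Arguments. Unset Strict Implicit. Unset Printing Implicit Defensive.
Local Open Scope nat_scope.

Lemma invol_even (T : finType) (g : T -> T) (A : {set T}) :
  {in A, forall x, g x \in A} -> {in A, forall x, g (g x) = x} ->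
  {in A, forall x, g x != x} -> ~~ odd #|A|.
Proof.
elim: {A}_.+1 {-2}A (ltnSn #|A|) => // N IH A ltA gA ggA gneq.
case: (set_0Vmem A) => [-> | [x xA]]; first by rewrite cards0.
set A' := A :\: [set x; g x].
have gxA := gA x xA.
have sub : [set x; g x] \subset A by rewrite subUset !sub1set xA gxA.
have cA : #|A| = #|A'| + 2.
  rewrite /A' cardsD (setIidPr sub) cards2 eq_sym (gneq x xA).
  rewrite subnK //; have := subset_leq_card sub; by rewrite cards2 eq_sym (gneq x xA).
have inA' y : y \in A' -> y \in A /\ y != x /\ y != g x.
  by rewrite !inE negb_or => /andP [/andP [-> ->] ->].
rewrite cA addn2 /= negbK.
apply: IH.
- by move: ltA; rewrite cA addn2 ltnS => /ltnW.
- move=> y /inA' [yA [yx ygx]]; rewrite !inE gA // andbT negb_or.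
  apply/andP; split; apply/eqP => h.
    by case/eqP: ygx; rewrite -h ggA.
  by case/eqP: yx; rewrite -(ggA y yA) h ggA.
- by move=> y /inA' [yA _]; apply: ggA.
- by move=> y /inA' [yA _]; apply: gneq.
Qed.

Section DoorCount.
Variable n : nat.
Variable f : 'I_n.+1 -> nat.
Hypothesis fle : forall i, f i <= n.

Definition isdoor (j : 'I_n.+1) := [forall l : 'I_n, exists i, (i != j) && (f i == l)].
Definition isfull := [forall l : 'I_n.+1, exists i, f i == l].

Let g (i : 'I_n.+1) : 'I_n.+1 := inord (f i).
Let gE i : (g i : nat) = f i. Proof. by rewrite /g inordK // ltnS. Qed.

Lemma door_inj j : isdoor j ->
  {in [set~ j] &, injective g} /\ (forall i, i != j -> f i < n).
Proof.
move=> /forallP Dj.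
have sub : [set~ (@ord_max n)] \subset [set g x | x in [set~ j]].
  apply/subsetP => x; rewrite !inE => xn.
  have xlt : x < n by have := ltn_ord x; rewrite ltnS leq_eqVlt; case/orP=> // /eqP h; case/eqP: xn; apply: val_inj.
  have /existsP [i /andP [ij /eqP fi]] := Dj (Ordinal xlt).
  apply/imsetP; exists i; first by rewrite !inE.
  by apply/val_inj => /=; rewrite gE fi.
have c1 : #|[set~ (@ord_max n)]| = n by rewrite cardsC1 card_ord.
have c2 : #|[set~ j]| = n by rewrite cardsC1 card_ord.
have le1 := subset_leq_card sub.
have le2 : #|[set g x | x in [set~ j]]| <= #|[set~ j]| by apply: leq_imset_card.
have eqc : #|[set g x | x in [set~ j]]| = #|[set~ j]| by apply/eqP; rewrite eqn_leq le2 c2 -{1}c1 le1.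
split; first by apply/imset_injP; rewrite eqc.
have eqs : [set~ (@ord_max n)] = [set g x | x in [set~ j]].
  by apply/eqP; rewrite eqEcard sub eqc c1 c2 /=.
move=> i ij.
have : g i \in [set~ (@ord_max n)] by rewrite eqs; apply/imsetP; exists i; rewrite // !inE.
rewrite !inE -gE => gi.
have := ltn_ord (g i); rewrite ltnS leq_eqVlt; case/orP => // /eqP h.
by case/eqP: gi; apply: val_inj.
Qed.

Lemma door_parity : odd #|[set j | isdoor j]| = isfull.
Proof.
case: (boolP isfull) => [/forallP F | nF].
  have ginj : injective g.
    have sub : [set: 'I_n.+1] \subset [set g x | x in [set: 'I_n.+1]].
      apply/subsetP => x _; have /existsP [i /eqP fi] := F x.
      by apply/imsetP; exists i; rewrite ?inE //; apply/val_inj => /=; rewrite gE fi.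
    have : #|[set g x | x in [set: 'I_n.+1]]| == #|[set: 'I_n.+1]|.
      by rewrite eqn_leq leq_imset_card subset_leq_card.
    by move/imset_injP => h x y gxy; apply: h; rewrite ?inE.
  have [j0 fj0] : exists j0, f j0 = n.
    by have /existsP [j0 /eqP h] := F ord_max; exists j0.
  suff -> : [set j | isdoor j] = [set j0] by rewrite cards1.
  apply/setP => j; rewrite !inE; apply/idP/idP => [Dj | /eqP ->].
    have [_ h] := door_inj Dj.
    case: (eqVneq j0 j) => [_ // | jj0].
    by have := h _ jj0; rewrite fj0 ltnn.
  apply/forallP => l; have /existsP [i /eqP fi] := F (widen_ord (leqnSn n) l).
  apply/existsP; exists i; rewrite fi eqxx andbT.
  apply/eqP => eij; move: fi; rewrite eij fj0 /= => nl.
  by have := ltn_ord l; rewrite -nl ltnn.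
case: (set_0Vmem [set j | isdoor j]) => [-> | [j]]; first by rewrite cards0.
rewrite inE => Dj.
have [injj ltj] := door_inj Dj.
have fjn : f j < n.
  case: (ltnP (f j) n) => // fjge.
  case/negP: nF; apply/forallP => l; case: (eqVneq (l : nat) n) => ln.
    by apply/existsP; exists j; rewrite ln eqn_leq fle fjge.
  have llt : l < n by have := ltn_ord l; rewrite ltnS leq_eqVlt (negPf ln).
  have /forallP Dj' := Dj.
  have /existsP [i /andP [_ fi]] := Dj' (Ordinal llt).
  by apply/existsP; exists i.
have /forallP Dj' := Dj.
have /existsP [j' /andP [j'j /eqP fj']] := Dj' (Ordinal fjn).
suff -> : [set j | isdoor j] = [set j; j'] by rewrite cards2 eq_sym j'j.
apply/setP => k; rewrite !inE; apply/idP/idP => [Dk | /orP [] /eqP ->] //.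
  case: (eqVneq k j) => [_ // | kj]; case: (eqVneq k j') => [_ // | kj'].
  have [injk _] := door_inj Dk.
  have : j = j' by apply: injk; rewrite ?inE 1?eq_sym //; apply/val_inj => /=; rewrite !gE fj'.
  by move=> ejj; rewrite ejj eqxx in j'j.
apply/forallP => l; have /existsP [i /andP [ij fi]] := Dj' l.
case: (eqVneq i j') => [eij | ij'].
  apply/existsP; exists j; rewrite eq_sym j'j /=.
  by move: fi; rewrite eij fj'.
by apply/existsP; exists i; rewrite ij' fi.
Qed.
End DoorCount.

Lemma odd_card (T : finType) (P : pred T) :
  odd #|[set x | P x]| = \big[addb/false]_x P x.
Proof.
rewrite -sum1_card big_mkcond /= (big_morph odd oddD (erefl : odd 0 = false)).
by apply: eq_bigr => x _; rewrite inE; case: (P x).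
Qed.

Section Sperner.
Variable M : nat.

Definition vert n (v : {ffun 'I_n -> 'I_M.+1}) (p : {ffun 'I_n -> 'I_n}) (j : nat)
  : {ffun 'I_n -> nat} := [ffun k => (v k : nat) + (p k < j)].

Definition ingrid n (u : {ffun 'I_n -> nat}) := forall k, u k <= M.+1.

Lemma vert_grid n v p j : ingrid (@vert n v p j).
Proof. by move=> k; rewrite ffunE; have := ltn_ord (v k); case: (p k < j); rewrite ?addn1 ?addn0 // => /ltnW. Qed.

Definition SC n (lab : {ffun 'I_n -> nat} -> nat) :=
 [/\ forall u, ingrid u -> lab u <= n,
     forall u (k : 'I_n), ingrid u -> u k = 0 -> lab u != k &
     forall u (k : 'I_n), ingrid u -> u k = M.+1 -> lab u <= k].

Definition full n (lab : {ffun 'I_n -> nat} -> nat) (v : {ffun 'I_n -> 'I_M.+1}) p :=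
  [forall l : 'I_n.+1, exists i : 'I_n.+1, lab (vert v p i) == l :> nat].
Definition door n (lab : {ffun 'I_n -> nat} -> nat) (v : {ffun 'I_n -> 'I_M.+1}) p (j : 'I_n.+1) :=
  [forall l : 'I_n, exists i : 'I_n.+1, (i != j) && (lab (vert v p i) == l :> nat)].

Section Step.
Variable n' : nat.
Local Notation n := n'.+1.
Local Notation VP := ({ffun 'I_n -> 'I_M.+1} * {ffun 'I_n -> 'I_n})%type.

Definition sw (j : nat) (x : 'I_n) : 'I_n :=
  if (x : nat) == j.-1 then inord j else if (x : nat) == j then inord j.-1 else x.

Definition partner (t : VP * 'I_n.+1) : VP * 'I_n.+1 :=
  let: ((v, p), j) := t in
  if (0 < j < n) then ((v, [ffun k => sw j (p k)]), j)
  else if (j : nat) == 0 then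
    (([ffun k => inord (v k + ((p k : nat) == 0))],
      [ffun k => inord (if (p k : nat) == 0 then n' else (p k).-1)]), ord_max)
  else (([ffun k => inord (v k - ((p k : nat) == n'))],
      [ffun k => inord (if (p k : nat) == n' then 0 else (p k).+1)]), ord0).

Definition sinterior (t : VP * 'I_n.+1) : bool :=
  let: ((v, p), j) := t in
  (0 < j < n) ||
  (((j : nat) == 0) && [forall k, ((p k : nat) == 0) ==> (v k < M)]) ||
  (((j : nat) == n) && [forall k, ((p k : nat) == n') ==> (0 < v k)]).

Lemma sw_lt j x i : 0 < j < n -> i != j -> (sw j x < i) = (x < i).
Proof.
move=> /andP [j0 jn] /eqP ij; rewrite /sw.
case: eqP => [xj | _].
  by rewrite inordK //; apply/idP/idP; lia.
case: eqP => [xj | _] //.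
by rewrite inordK; [apply/idP/idP|]; lia.
Qed.

Lemma partner_facet t : sinterior t -> forall i : 'I_n.+1, i != t.2 ->
  exists2 i' : 'I_n.+1, i' != (partner t).2 &
    vert (partner t).1.1 (partner t).1.2 i' = vert t.1.1 t.1.2 i.
Proof.
case: t => [[v p] j] /= int i ij.
case: ifP => [jmid | jnmid].
  exists i => //=; apply/ffunP => k; rewrite !ffunE sw_lt //.
case: ifP int => [/eqP j0 | jn0]; rewrite jnmid /=.
  rewrite j0 /= orbF.
  move=> /forallP vM.
  have i0 : 0 < i by move: ij; rewrite -(inj_eq val_inj) /= j0; lia.
  have ilt := ltn_ord i.
  exists (inord i.-1).
    by rewrite -(inj_eq val_inj) /= inordK; lia.
  apply/ffunP => k; rewrite !ffunE /=.
  have := vM k; have := ltn_ord (v k); have := ltn_ord (p k).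
  rewrite (inordK (_ : i.-1 < n.+1)); last lia.
  case: eqP => [pk0 | pkn0] /= pkn vk vMk.
    rewrite !inordK; last (by lia); last by move: vMk; lia.
    rewrite pk0 i0 /=.
    case: ltnP => h /=; lia.
  rewrite !inordK; [|lia|lia].
  by case: ltnP => h1; case: ltnP => h2 /=; lia.
move=> /andP [/eqP jn /forallP v0].
have ilt : i < n by have := ltn_ord i; move: ij; rewrite -(inj_eq val_inj) /= jn; lia.
exists (inord i.+1).
  by rewrite -(inj_eq val_inj) /= inordK; lia.
apply/ffunP => k; rewrite !ffunE /=.
have := v0 k; have := ltn_ord (v k); have := ltn_ord (p k).
rewrite (inordK (_ : i.+1 < n.+1)); last lia.
case: eqP => [pkn | pknn] /= pkl vk vMk.
  rewrite !inordK; last (by lia); last by move: vMk; lia.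
  rewrite pkn /=.
  case: ltnP => h /=; move: vMk; lia.
rewrite !inordK; [|lia|lia].
by case: ltnP => h1; case: ltnP => h2 /=; lia.
Qed.

Lemma swE j (y : 'I_n) : 0 < j < n ->
  (sw j y : nat) = if (y : nat) == j.-1 then j else if (y : nat) == j then j.-1 else y.
Proof.
move=> /andP [j0 jn]; rewrite /sw.
case: eqP => _; first by rewrite inordK.
by case: eqP => _ //; rewrite inordK //; lia.
Qed.

Lemma sw_inv j x : 0 < j < n -> sw j (sw j x) = x.
Proof.
move=> jm; apply/val_inj => /=; rewrite !swE //.
move: jm => /andP [j0 jn].
move: (nat_of_ord x) => y.
case: (eqVneq y j.-1) => [->|h1]; first by rewrite eqxx; case: eqP; lia.
have hj : (j == j.-1) = false by apply/eqP; lia.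
case: (eqVneq y j) => [->|h2]; first by rewrite eqxx.

by rewrite (negPf h1) (negPf h2).
Qed.

Lemma partner_mid v p (j : 'I_n.+1) : 0 < j < n ->
  partner ((v, p), j) = ((v, [ffun k => sw j (p k)]), j).
Proof. by rewrite /partner => ->. Qed.

Lemma partner_0 v p (j : 'I_n.+1) : (j : nat) = 0 ->
  partner ((v, p), j) = (([ffun k => inord (v k + ((p k : nat) == 0))],
      [ffun k => inord (if (p k : nat) == 0 then n' else (p k).-1)]), ord_max).
Proof. by rewrite /partner => ->. Qed.

Lemma partner_n v p (j : 'I_n.+1) : (j : nat) = n ->
  partner ((v, p), j) = (([ffun k => inord (v k - ((p k : nat) == n'))],
      [ffun k => inord (if (p k : nat) == n' then 0 else (p k).+1)]), ord0).
Proof. by rewrite /partner => ->; rewrite ltnn andbF. Qed.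

Lemma sinterior_cases v p (j : 'I_n.+1) : sinterior ((v, p), j) ->
  [\/ 0 < j < n,
      (j : nat) = 0 /\ (forall k, (p k : nat) = 0 -> v k < M) |
      (j : nat) = n /\ (forall k, (p k : nat) = n' -> 0 < v k)].
Proof.
rewrite /sinterior; case/orP => [/orP [h | /andP [/eqP h /forallP H]] | /andP [/eqP h /forallP H]].
- by constructor 1.
- by constructor 2; split => // k pk; have := H k; rewrite pk eqxx.
- by constructor 3; split => // k pk; have := H k; rewrite pk eqxx.
Qed.

Lemma partner_invol t : sinterior t -> partner (partner t) = t.
Proof.
case: t => [[v p] j] /sinterior_cases [jmid | [j0 vM] | [jn v0]].
- by rewrite !partner_mid //; congr (_, _, _); apply/ffunP => k; rewrite !ffunE sw_inv.
- rewrite partner_0 // partner_n //.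
  congr (_, _, _); [apply/ffunP => k; rewrite !ffunE; apply/val_inj => /=
                   |apply/ffunP => k; rewrite !ffunE; apply/val_inj => /=
                   |by apply/val_inj; rewrite /= j0].
    have := ltn_ord (v k); have := ltn_ord (p k).
    case: eqP => [pk0 | pkn0] /= pkn vk.
      by rewrite !inordK ?eqxx; have := vM k pk0; lia.
    rewrite (inordK (_ : (p k).-1 < n'.+1)); last lia.
    have -> : ((p k).-1 == n') = false by apply/eqP; lia.
    by rewrite !inordK; lia.
  move: (nat_of_ord (p k)) (ltn_ord (p k)) => q qn.
  case: (eqVneq q 0) => [-> | q0].
    by rewrite (inordK (_ : n' < n'.+1)) // eqxx inordK.
  rewrite (inordK (_ : q.-1 < n'.+1)); last lia.
  have -> : (q.-1 == n') = false by apply/eqP; lia.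
  by rewrite inordK; lia.
- rewrite partner_n // partner_0 //.
  congr (_, _, _); [apply/ffunP => k; rewrite !ffunE; apply/val_inj => /=
                   |apply/ffunP => k; rewrite !ffunE; apply/val_inj => /=
                   |by apply/val_inj; rewrite /= jn].
    have := ltn_ord (v k); have := ltn_ord (p k).
    case: eqP => [pk0 | pkn0] /= pkn vk.
      by rewrite !inordK ?eqxx; have := v0 k pk0; lia.
    rewrite (inordK (_ : (p k).+1 < n'.+1)); last lia.
    by rewrite !inordK; lia.
  move: (nat_of_ord (p k)) (ltn_ord (p k)) => q qn.
  case: (eqVneq q n') => [-> | q0].
    by rewrite (inordK (_ : 0 < n'.+1)) // inordK.
  rewrite (inordK (_ : q.+1 < n'.+1)); last lia.
  by rewrite inordK; lia.
Qed.

Lemma partner_prop t : sinterior t -> injectiveb t.1.2 ->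
  sinterior (partner t) && injectiveb (partner t).1.2.
Proof.
case: t => [[v p] j] int pinjb.
have pinj : injective p by apply/injectiveP.
case/sinterior_cases: int => [jmid | [j0 vM] | [jn v0]].
- rewrite partner_mid //= jmid /=; apply/injectiveP => x y; rewrite !ffunE.
  by move/(can_inj (fun z => sw_inv z jmid))/pinj.
- rewrite partner_0 //=; apply/andP; split.
    rewrite ltnn eqxx /=; apply/forallP => k; rewrite !ffunE.
    have vk := ltn_ord (v k); have pk := ltn_ord (p k).
    case: (eqVneq (nat_of_ord (p k)) 0) => [pk0|pkn0].
      rewrite (inordK (_ : n' < n'.+1)) // eqxx /= inordK; last by have := vM k pk0; lia.
      by rewrite addn1.
    rewrite inordK; last lia.
    have -> : ((p k).-1 == n') = false by apply/negbTE; apply/eqP; lia.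
    by [].
  apply/injectiveP => x y; rewrite !ffunE => /(congr1 val) /=.
  have px := ltn_ord (p x); have py := ltn_ord (p y).
  rewrite !inordK; try (case: eqP => ?; lia).
  move=> h; apply: pinj; apply/val_inj => /=; move: h.
  by case: eqP => ?; case: eqP => ?; lia.
- rewrite partner_n //= /=; apply/andP; split.
    rewrite /= orbF; apply/forallP => k; rewrite !ffunE.
    have vk := ltn_ord (v k); have pk := ltn_ord (p k).
    case: (eqVneq (nat_of_ord (p k)) n') => [pk0|pkn0].
      rewrite (inordK (_ : 0 < n'.+1)) // eqxx /= inordK; last by lia.
      by rewrite subn1; have := v0 k pk0; lia.
    by rewrite inordK; lia.
  apply/injectiveP => x y; rewrite !ffunE => /(congr1 val) /=.
  have px := ltn_ord (p x); have py := ltn_ord (p y).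
  rewrite !inordK; try (case: eqP => ?; lia).
  move=> h; apply: pinj; apply/val_inj => /=; move: h.
  by case: eqP => ?; case: eqP => ?; lia.
Qed.

Lemma partner_neq t : sinterior t -> injectiveb t.1.2 -> partner t != t.
Proof.
case: t => [[v p] j] int pinjb.
have pinj : injective p by apply/injectiveP.
case/sinterior_cases: int => [jmid | [j0 vM] | [jn v0]].
- rewrite partner_mid //; apply/negP => /eqP [] /ffunP.
  have [q pK qK] := injF_bij pinj.
  move: (jmid) => /andP [j0 jn].
  move=> /(_ (q (inord j))); rewrite ffunE qK => /(congr1 val).
  rewrite /= swE // inordK // eqn_leq leqNgt -(ltn_predK j0) ltnSn /= eqxx; lia.
- rewrite partner_0 //; apply/negP => /eqP [] _ _ /(congr1 val) /=; lia.
- rewrite partner_n //; apply/negP => /eqP [] _ _ /(congr1 val) /=; lia.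
Qed.

Section Lab.
Variable lab : {ffun 'I_n -> nat} -> nat.
Hypothesis hSC : SC lab.

Lemma partner_door t : sinterior t -> door lab t.1.1 t.1.2 t.2 ->
  door lab (partner t).1.1 (partner t).1.2 (partner t).2.
Proof.
move=> int /forallP D; apply/forallP => l.
have /existsP [i /andP [it /eqP li]] := D l.
have [i' i'p vi] := partner_facet int it.
by apply/existsP; exists i'; rewrite i'p vi li eqxx.
Qed.

Definition Aint := [set t : VP * 'I_n.+1 |
  [&& injectiveb t.1.2, door lab t.1.1 t.1.2 t.2 & sinterior t]].

Lemma Aint_even : ~~ odd #|Aint|.
Proof.
apply: (@invol_even _ partner).
- move=> t; rewrite !inE => /and3P [ti td tint].
  have /andP [-> ->] := partner_prop tint ti.
  by rewrite partner_door.
- by move=> t; rewrite !inE => /and3P [_ _ tint]; apply: partner_invol.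
- by move=> t; rewrite !inE => /and3P [ti _ tint]; apply: partner_neq.
Qed.

Definition ext (w : {ffun 'I_n' -> nat}) : {ffun 'I_n -> nat} :=
  [ffun k => if unlift ord_max k is Some k' then w k' else M.+1].
Definition lab' w := lab (ext w).

Lemma ext_grid w : ingrid w -> ingrid (ext w).
Proof. by move=> g k; rewrite ffunE; case: unliftP => [k' _|_]. Qed.

Lemma SC_lab' : SC lab'.
Proof.
case: hSC => h1 h2 h3; split.
- move=> u g; have := h3 _ ord_max (ext_grid g).
  by rewrite ffunE unlift_none /=; apply.
- move=> u k g uk; have := h2 _ (lift ord_max k) (ext_grid g).
  by rewrite ffunE liftK lift_max; apply.
- move=> u k g uk; have := h3 _ (lift ord_max k) (ext_grid g).
  by rewrite ffunE liftK lift_max; apply.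
Qed.

Definition liftV (u : {ffun 'I_n' -> 'I_M.+1}) : {ffun 'I_n -> 'I_M.+1} :=
  [ffun k => if unlift ord_max k is Some k' then u k' else ord_max].
Definition liftP (q : {ffun 'I_n' -> 'I_n'}) : {ffun 'I_n -> 'I_n} :=
  [ffun k => if unlift ord_max k is Some k' then lift ord0 (q k') else ord0].
Definition emb (uq : {ffun 'I_n' -> 'I_M.+1} * {ffun 'I_n' -> 'I_n'}) : VP * 'I_n.+1 :=
  ((liftV uq.1, liftP uq.2), ord0).

Lemma ext_vert u q (i : nat) : ext (vert u q i) = vert (liftV u) (liftP q) i.+1.
Proof.
apply/ffunP => k; rewrite !ffunE; case: unliftP => [k' _ | _].
  by rewrite ffunE lift0.
by rewrite /= addn1.
Qed.

Lemma door_full u q : door lab (liftV u) (liftP q) ord0 = full lab' u q.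
Proof.
apply/forallP/forallP => D l.
  have /existsP [i /andP [i0 /eqP li]] := D l.
  rewrite eq_sym in i0; have [i' ei _] := unlift_some i0.
  apply/existsP; exists i'.
  by rewrite /lab' ext_vert -lift0 -ei li.
have /existsP [i /eqP li] := D l.
apply/existsP; exists (lift ord0 i); rewrite eq_sym neq_lift /=.
by rewrite /bump leq0n add1n -ext_vert -li.
Qed.

Lemma inj_liftP q : injectiveb (liftP q) = injectiveb q.
Proof.
apply/injectiveP/injectiveP => qi.
  move=> x y e; apply: (@lift_inj _ ord_max); apply: qi; rewrite !ffunE !liftK.
  by rewrite e.
move=> x y; rewrite !ffunE.
case: unliftP => [x' -> | ->]; case: unliftP => [y' -> | ->] //.
all: try by move/lift_inj/qi => ->.
all: by move/(congr1 (@nat_of_ord _)); rewrite lift0.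
Qed.

Lemma emb_inj : injective emb.
Proof.
move=> [u q] [u' q'] [] /ffunP eu /ffunP eq; congr (_, _); apply/ffunP => k.
  by have := eu (lift ord_max k); rewrite !ffunE liftK.
by have := eq (lift ord_max k); rewrite !ffunE liftK => /lift_inj.
Qed.

Definition Abd := [set t : VP * 'I_n.+1 |
  [&& injectiveb t.1.2, door lab t.1.1 t.1.2 t.2 & ~~ sinterior t]].
Definition Full' := [set uq : {ffun 'I_n' -> 'I_M.+1} * {ffun 'I_n' -> 'I_n'} |
  injectiveb uq.2 && full lab' uq.1 uq.2].

Lemma emb_notint uq : ~~ sinterior (emb uq).
Proof.
rewrite /emb /sinterior /= orbF negb_forall.
by apply/existsP; exists ord_max; rewrite !ffunE unlift_none /= ltnn.
Qed.

Lemma Abd_img : Abd = emb @: Full'.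
Proof.
case: hSC => h1 h2 h3.
apply/setP => t; apply/idP/idP; last first.
  case/imsetP => [[u q]]; rewrite inE => /andP [qi F] ->.
  by rewrite inE emb_notint andbT /= inj_liftP qi door_full F.
case: t => [[v p] j]; rewrite inE /= => /and3P [pi D nint].
have pinj : injective p by apply/injectiveP.
have jle := ltn_ord j.
case: (eqVneq (j : nat) n) => jn.
  move: nint; rewrite /sinterior jn eqxx ltnn andbF /= negb_forall.
  case/existsP => k; rewrite negb_imply -leqNgt leqn0 => /andP [/eqP pk /eqP vk].
  have /existsP [i /andP [ij /eqP li]] := (forallP D) k.
  have ilt : i < n by move: ij; rewrite -(inj_eq val_inj) /= jn; have := ltn_ord i; lia.
  have := h2 (vert v p i) k (vert_grid _ _ _).
  by rewrite ffunE vk pk ltnNge -ltnS ilt li eqxx => /(_ erefl).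
case: (eqVneq (j : nat) 0) => j0; last first.
  by move: nint; rewrite /sinterior; have -> : 0 < j < n by lia.
move: nint; rewrite /sinterior j0 /= negb_or negb_forall.
case/andP => /existsP [k]; rewrite negb_imply -leqNgt => /andP [/eqP pk vk] _.
have vkM : (v k : nat) = M by apply/eqP; rewrite eqn_leq vk andbT -ltnS ltn_ord.
have /existsP [i /andP [ij /eqP li]] := (forallP D) ord_max.
have i0 : 0 < i by move: ij; rewrite -(inj_eq val_inj) /= j0; lia.
have := h3 (vert v p i) k (vert_grid _ _ _).
rewrite ffunE vkM pk i0 addn1 li /= => /(_ erefl) kge.
have kmax : k = ord_max by apply/val_inj => /=; have := ltn_ord k; lia.
subst k.
pose u := [ffun k' => v (lift ord_max k')].
pose q := [ffun k' => odflt k' (unlift ord0 (p (lift ord_max k')))].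
have eV : liftV u = v.
  apply/ffunP => k; rewrite !ffunE; case: unliftP => [k' -> | ->].
    by rewrite ffunE.
  by apply/val_inj; rewrite /= vkM.
have eP : liftP q = p.
  apply/ffunP => k; rewrite !ffunE; case: unliftP => [k' -> | ->].
    rewrite ffunE.
    have ne : ord0 != p (lift ord_max k').
      apply/eqP => e; have : p ord_max = p (lift ord_max k') by apply/val_inj; rewrite /= pk -e.
      by move/pinj/eqP; rewrite (negPf (neq_lift _ _)).
    by have [j' -> ->] := unlift_some ne.
  by apply/val_inj; rewrite /= pk.
have ej : j = ord0 by apply/val_inj.
apply/imsetP; exists (u, q).
  rewrite inE /= -inj_liftP eP pi /= -door_full eV eP -ej.
  exact: D.
by rewrite /emb /= eV eP ej.
Qed.

End Lab.

End Step.
Theorem sperner n (lab : {ffun 'I_n -> nat} -> nat) : SC lab ->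
  odd #|[set vp : {ffun 'I_n -> 'I_M.+1} * {ffun 'I_n -> 'I_n} |
          injectiveb vp.2 && full lab vp.1 vp.2]|.
Proof.
elim: n lab => [|n' IH] lab hSC.
  case: (hSC) => h1 _ _.
  suff -> : [set vp : {ffun 'I_0 -> 'I_M.+1} * {ffun 'I_0 -> 'I_0} |
          injectiveb vp.2 && full lab vp.1 vp.2] = setT.
    by rewrite cardsT card_prod !card_ffun !card_ord.
  apply/setP => [[v p]]; rewrite !inE /=.
  apply/andP; split; first by apply/injectiveP => [[]].
  apply/forallP => l; apply/existsP; exists ord0.
  have := h1 (vert v p 0) (vert_grid _ _ _); rewrite leqn0 => /eqP ->.
  by rewrite (ord1 l).
case: (hSC) => h1 h2 h3.
set A := [set t : (({ffun 'I_n'.+1 -> 'I_M.+1} * {ffun 'I_n'.+1 -> 'I_n'.+1}) * 'I_n'.+2) |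
          injectiveb t.1.2 && door lab t.1.1 t.1.2 t.2].
have step1 : odd #|[set vp : {ffun 'I_n'.+1 -> 'I_M.+1} * {ffun 'I_n'.+1 -> 'I_n'.+1} |
          injectiveb vp.2 && full lab vp.1 vp.2]| = odd #|A|.
  rewrite !odd_card -(pair_bigA _ (fun (vp : {ffun 'I_n'.+1 -> 'I_M.+1} * {ffun 'I_n'.+1 -> 'I_n'.+1}) (j : 'I_n'.+2) => injectiveb vp.2 && door lab vp.1 vp.2 j)) /=.
  apply: eq_bigr => [[v p]] _ /=.
  rewrite -odd_card; case: (injectiveb p) => /=; last by rewrite (_ : [set _ | _] = set0) ?cards0 //; apply/setP => j; rewrite !inE.
  symmetry; exact: (@door_parity _ (fun i => lab (vert v p i)) (fun i => h1 _ (vert_grid _ _ _))).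
have step2 : #|A| = #|Aint lab| + #|Abd lab|.
  rewrite -(cardsID [set t | sinterior t] A).
  have -> : A :&: [set t | sinterior t] = Aint lab.
    by apply/setP => t; rewrite !inE; case: (sinterior t); rewrite ?andbT ?andbF.
  have -> : A :\: [set t | sinterior t] = Abd lab.
    by apply/setP => t; rewrite !inE; case: (sinterior t); rewrite ?andbT ?andbF.
  done.
rewrite step1 step2 oddD (negPf (Aint_even lab)) /= (Abd_img hSC) card_imset; last exact: emb_inj.
exact: IH (SC_lab' hSC).
Qed.

End Sperner.

End Disc.
Import Disc.

From mathcomp Require Import all_classical all_reals all_analysis.
From mathcomp Require Import ring lra.
Import Order.TTheory GRing.Theory Num.Theory.
Import numFieldNormedType.Exports.

Local Open Scope classical_set_scope.
Local Open Scope ring_scope.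

Lemma rV_ballP (R : realType) n (x y : 'rV[R]_n) e :
  ball x e y <-> (0 < e /\ forall k, `|x ord0 k - y ord0 k| < e).
Proof.
split => [[e0 H] | [e0 H]]; split => //.
  by move=> k; have := H ord0 k.
by move=> i j; rewrite (ord1 i); apply: H.
Qed.

Lemma fin_min (R : realDomainType) (T : eqType) (s : seq T) (f : T -> R) :
  (forall x, x \in s -> 0 < f x) -> exists2 d, 0 < d & forall x, x \in s -> d <= f x.
Proof.
elim: s => [|y s IH] H; first by exists 1.
have [d d0 Hd] : exists2 d, 0 < d & forall x, x \in s -> d <= f x.
  by apply: IH => x xs; apply: H; rewrite inE xs orbT.
exists (Num.min (f y) d); first by rewrite lt_min H ?mem_head.
move=> x; rewrite inE => /orP [/eqP -> | xs]; first by rewrite ge_min lexx.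
by rewrite ge_min Hd ?orbT.
Qed.

Lemma lebesgue (R : realType) n (I : finType) (C : I -> set 'rV[R]_n)
  (Q : set 'rV[R]_n) : compact Q -> (forall i, closed (C i)) ->
  exists2 d, 0 < d & forall y, Q y -> exists2 x0, Q x0 &
    forall z, ball y d z -> forall i, C i z -> C i x0.
Proof.
move=> cQ Ccl.
have H x : exists r : R, 0 < r /\ (forall z, ball x r z -> forall i, C i z -> C i x).
  have : \forall z \near x, forall i, C i z -> C i x.
    apply: (@filter_forall _ I (fun i z => C i z -> C i x) (nbhs x) _) => i.
    case: (pselect (C i x)) => Cx; first by apply: nearW => z _.
    have : nbhs x (~` C i) by apply: open_nbhs_nbhs; split => //; exact: closed_openC.
    by apply: filterS => z nCz Cz.
  by move/nbhs_ballP => [r /= r0 Hr]; exists r; split => // z bz; apply: Hr.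
have [r Hr] := choice H.
have cov : Q `<=` \bigcup_(x in Q) ball x (r x / 2).
  move=> x Qx; exists x => //; apply: ballxx.
  by rewrite divr_gt0 // (Hr x).1.
move: cQ; rewrite compact_cover => /(_ _ Q (fun x => ball x (r x / 2))) [].
  by move=> x _; exact: ball_open.
  exact: cov.
move=> D' sD' covD'.
have [d d0 Hd] := @fin_min R _ (finmap.enum_fset D') (fun x => r x / 2) (fun x _ => divr_gt0 (Hr x).1 (ltr0Sn _ 1)).
exists d => // y Qy.
have [x0 x0D bxy] := covD' y Qy.
have Qx0 : Q x0 by have := sD' x0 x0D; rewrite inE.
exists x0 => // z yz i Cz.
apply: (Hr x0).2 Cz.
have := ball_triangle bxy yz; apply: le_ball.
have := Hd x0 x0D; rewrite [r x0 in X in _ -> X](splitr (r x0)); lra.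
Qed.

Lemma edist_coord (R : realType) n (x y : 'rV[R]_n) k :
  `|x ord0 k - y ord0 k| <= Defs.edist x y.
Proof.
rewrite /Defs.edist /Defs.enorm -sqrtr_sqr ler_sqrt; last by apply: sumr_ge0 => i _; exact: sqr_ge0.
rewrite (bigD1 k) //= !mxE lerDl; apply: sumr_ge0 => i _; exact: sqr_ge0.
Qed.

Lemma enorm_cube (R : realType) n (x : 'rV[R]_n) a : a ^+ 2 * n%:R = 1 ->
  (forall k, - a <= x ord0 k <= a) -> Defs.enorm x <= 1.
Proof.
move=> ha hx; rewrite /Defs.enorm -sqrtr1 ler_sqrt ?ler01 //.
apply: le_trans (_ : \sum_(i < n) a ^+ 2 <= _).
  by apply: ler_sum => i _; have /andP [h1 h2] := hx i; nra.
by rewrite sumr_const card_ord -mulr_natr ha.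
Qed.

Theorem corollary1p4 (R : realType) (n : nat) (hn : (1 <= n)%N) :
  ~ exists (I : finType) (P : I -> set 'rV[R]_n),
      [/\ decomposition (@unit_ball R n) P,
          (forall i, diam_lt (P i) (2 / Num.sqrt (n%:R))) &
          (forall x, @unit_ball R n x -> (meet_count P x <= n)%N)].
Proof.
move=> [I [P [[Pcl _ Psub Pcov] Pdiam Pmeet]]].
have [n' en] : exists n', n = n'.+1 by exists n.-1; rewrite prednK.
subst n.
set a : R := (Num.sqrt (n'.+1%:R))^-1.
have sq0 : 0 < Num.sqrt (n'.+1%:R : R) by rewrite sqrtr_gt0 ltr0Sn.
have a0 : 0 < a by rewrite invr_gt0.
have ha : a ^+ 2 * n'.+1%:R = 1.
  by rewrite /a exprVn sqr_sqrtr ?ler0n // mulVf // pnatr_eq0.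
set Q := [set v : 'rV[R]_n'.+1 | forall k, (`[- a, a]%classic : set R) (v ord0 k)].
have QE x : Q x <-> forall k, - a <= x ord0 k <= a.
  by split => h k; have := h k; rewrite /= in_itv.
have QB x : Q x -> unit_ball x.
  by move/QE => h; rewrite /unit_ball /=; apply: enorm_cube ha h.
have cQ : compact Q by exact: (@rV_compact _ _ (fun _ => `[- a, a]%classic) (fun _ => @segment_compact R _ _)).
have [C HC] := choice Pcl.
have [d d0 Leb] := @lebesgue R _ I C Q cQ (fun i => (HC i).1).
pose M := Num.Def.archi_bound (2 * a / d).
have hM : 2 * a / d < M%:R by apply: archi_boundP; apply/ltW/divr_gt0 => //; apply: mulr_gt0.
set h : R := 2 * a / M.+1%:R.
have h0 : 0 < h by rewrite /h divr_gt0 ?ltr0Sn // mulr_gt0.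
have hM1 : h * M.+1%:R = 2 * a by rewrite /h divfK // pnatr_eq0.
have hd : h < d.
  rewrite /h ltr_pdivrMr ?ltr0Sn //.
  move: hM; rewrite ltr_pdivrMr // -natr1 => hM; nra.
pose pt (u : {ffun 'I_n'.+1 -> nat}) : 'rV[R]_n'.+1 := \row_k (- a + h * (u k)%:R).
have ptQ u : ingrid M u -> Q (pt u).
  move=> g; apply/QE => k; rewrite mxE.
  have : (u k)%:R <= M.+1%:R :> R by rewrite ler_nat; exact: g.
  have : 0 <= (u k)%:R :> R by rewrite ler0n.
  by move=> u0 uM; apply/andP; split; nra.
have g0 : ingrid M [ffun k : 'I_n'.+1 => 0%N] by move=> k; rewrite ffunE.
have [i0 _] := Pcov _ (QB _ (ptQ _ g0)).
have Hc : forall u, exists i, ingrid M u -> P i (pt u).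
  move=> u; case: (pselect (ingrid M u)) => g.
    by have [i Pi] := Pcov _ (QB _ (ptQ u g)); exists i.
  by exists i0.
have [col Hcol] := choice Hc.
pose meets i (k : 'I_n'.+1) := exists z, P i z /\ z ord0 k = - a.
pose L i := find (fun k : nat => ~~ `[< meets i (inord k) >]) (iota 0 n'.+1).
have LleN i : (L i <= n'.+1)%N by rewrite /L -[X in (_ <= X)%N](size_iota 0 n'.+1) find_size.
have Lk i (k : 'I_n'.+1) : L i = k -> ~ meets i k.
  move=> Lik.
  have hs : has (fun k : nat => ~~ `[< meets i (inord k) >]) (iota 0 n'.+1).
    by rewrite has_find size_iota -/(L i) Lik ltn_ord.
  move: (nth_find 0%N hs); rewrite -/(L i) Lik nth_iota // add0n inord_val.
  by move/asboolPn.
have Lk2 i (k : 'I_n'.+1) : (k < L i)%N -> meets i k.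
  move/(before_find 0%N); rewrite nth_iota ?add0n ?inord_val; last first.
    exact: ltn_ord.
  by move/negbFE/asboolP.
pose lab (u : {ffun 'I_n'.+1 -> nat}) := L (col u).
have two_a : 2 / Num.sqrt (n'.+1%:R) = 2 * a by [].
have hSC : SC M lab.
  split.
  - by move=> u _; exact: LleN.
  - move=> u k g uk; apply/eqP => E; apply: (Lk _ k E).
    exists (pt u); split; first exact: Hcol u g.
    by rewrite mxE uk mulr0 addr0.
  - move=> u k g uk; rewrite leqNgt; apply/negP => lt.
    have [z [Pz zk]] := Lk2 _ k lt.
    have [dd ddlt Hdd] := Pdiam (col u).
    have e1 := Hdd _ _ Pz (Hcol u g).
    have e2 := @edist_coord R _ z (pt u) k.
    move: e2; rewrite zk mxE uk hM1.
    have -> : `|- a - (- a + 2 * a)| = 2 * a.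
      by rewrite (_ : _ - _ = - (2 * a)); [rewrite normrN gtr0_norm // mulr_gt0 | ring].
    move: ddlt; rewrite two_a => ddlt e2; lra.
have /odd_gt0 /card_gt0P [[v p]] := sperner hSC.
rewrite inE => /andP [_ /forallP Hfull].
have : forall l : 'I_n'.+2, exists i : 'I_n'.+2, lab (vert v p i) = l.
  by move=> l; have /existsP [i /eqP e] := Hfull l; exists i.
case/fin_all_exists => io Hio.
set y := pt (vert v p 0).
have [x0 Qx0 Hx0] := Leb y (ptQ _ (vert_grid _ _ _)).
have Px0 l : P (col (vert v p (io l))) x0.
  set w := vert v p (io l).
  have Pw := Hcol w (vert_grid _ _ _).
  have Cw : C (col w) (pt w) by move: Pw; rewrite (HC _).2 => -[].
  rewrite (HC _).2; split; first exact: QB.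
  apply: Hx0 Cw; apply/rV_ballP; split => // k.
  rewrite !mxE /w /vert !ffunE /= addn0.
  case: (p k < io l)%N => /=.
    rewrite addn1 -natr1 (_ : _ - _ = - h); last by ring.
    by rewrite normrN gtr0_norm.
  by rewrite addn0 subrr normr0.
pose g l := col (vert v p (io l)).
have ginj : injective g.
  move=> l1 l2 e; apply/val_inj => /=; rewrite -Hio -[RHS]Hio.
  by rewrite /lab -/(g l1) -/(g l2) e.
have := Pmeet x0 (QB _ Qx0); rewrite /meet_count.
have sub : ([set g l | l in [set: 'I_n'.+2]] \subset [set i : I | `[< P i x0 >] ])%SET.
  by apply/fintype.subsetP => _ /imsetP [l _ ->]; rewrite inE; apply/asboolP; exact: Px0.
have := subset_leq_card sub; rewrite card_imset // cardsT card_ord => h1 h2.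
by have := leq_trans h1 h2; rewrite ltnn.
Qed.
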